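(* Let $F:[0,1]^d\to[0,1]^d$ be a discrete time regulatory network with parameters $K,T,s,a$ as in the context, let $\Lambda$ be its limit set and $\Delta$ its discontinuity set. If $\operatorname{dist}(\Lambda,\Delta)>0$, then $\Lambda$ is finite.
   Context: $K\in[0,1]^{d\times d}$ with $\sum_iK_{i,j}=1$ for each $j$; $s\in\{-1,0,1\}^{d\times d}$ and $T\in[0,1]^{d\times d}$ with $s_{i,j}=0$ iff $K_{i,j}=0$ and $T_{i,j}=0$ iff $K_{i,j}=0$; $a\in[0,1]$; $H(x)=0$ for $x\le0$, $H(x)=1$ for $x>0$; $F(x)_j=ax_j+(1-a)\sum_iK_{i,j}H(s_{i,j}(x_i-T_{i,j}))$. The limit set $\Lambda$ is the set of $x\in[0,1]^d$ for which there exist $y\in[0,1]^d$ and times $t_1<t_2<\cdots$ with $\lim_{n\to\infty}F^{t_n}(y)=x$. The discontinuity set is $\Delta=\{x\in[0,1]^d:\ \exists\, i,k\in\{1,\dots,d\}\text{ with } x_i=T_{i,k}\}$. *)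

(* Defs.v *)
From HB Require Import structures.
From mathcomp Require Import all_boot all_order all_algebra.
From mathcomp Require Import all_classical all_reals all_analysis.
Set Implicit Arguments. Unset Strict Implicit. Unset Printing Implicit Defensive.
Import Order.TTheory GRing.Theory Num.Theory.
Import numFieldNormedType.Exports.
Local Open Scope classical_set_scope.
Local Open Scope ring_scope.

Definition heav {R : realType} (x : R) : R := if 0 < x then 1 else 0.

Definition regnet {R : realType} {d : nat} (a : R) (K : 'I_d -> 'I_d -> R)
    (s : 'I_d -> 'I_d -> int) (T : 'I_d -> 'I_d -> R) (x : 'I_d -> R) : 'I_d -> R :=
  fun j => a * x j + (1 - a) * \sum_(i < d) K i j * heav ((s i j)%:~R * (x i - T i j)).

Definition unit_cube {R : realType} {d : nat} : set ('I_d -> R) :=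
  [set x | forall i, 0 <= x i <= 1].

Definition limit_set {R : realType} {d : nat} (F : ('I_d -> R) -> ('I_d -> R))
  : set ('I_d -> R) :=
  [set x | unit_cube x /\ exists y, unit_cube y /\
     exists t : nat -> nat, (forall n, (t n < t n.+1)%N) /\
       (forall i : 'I_d, (fun n => iter (t n) F y i) @ \oo --> x i)].

Definition disc_set {R : realType} {d : nat} (T : 'I_d -> 'I_d -> R) : set ('I_d -> R) :=
  [set x | unit_cube x /\ exists i k, x i = T i k].

(* dist(A, B) > 0, using the sup-norm on R^d (equivalent to the Euclidean one). *)
Definition dist_pos {R : realType} {d : nat} (A B : set ('I_d -> R)) : Prop :=
  exists2 eps : R, 0 < eps &
    forall x y, A x -> B y -> exists i : 'I_d, eps <= `|x i - y i|.

(* Main.v *)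
Require Import Defs.
From HB Require Import structures.
From mathcomp Require Import all_boot all_order all_algebra.
From mathcomp Require Import all_classical all_reals all_analysis.
From mathcomp Require Import ring lra zify.
Import Order.TTheory GRing.Theory Num.Theory.
Import numFieldNormedType.Exports.
Local Open Scope classical_set_scope.
Local Open Scope ring_scope.

Section Pf.
Variables (R : realType) (d : nat) (a : R)
  (K : 'I_d -> 'I_d -> R) (s : 'I_d -> 'I_d -> int) (T : 'I_d -> 'I_d -> R).
Hypothesis hK01 : forall i j, 0 <= K i j <= 1.
Hypothesis hKsum : forall j, \sum_(i < d) K i j = 1.
Hypothesis hs : forall i j, s i j = 0 \/ s i j = 1 \/ s i j = -1.
Hypothesis hT01 : forall i j, 0 <= T i j <= 1.
Hypothesis ha : 0 <= a <= 1.

Local Notation F := (regnet a K s T).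

Definition code (x : 'I_d -> R) j :=
  \sum_(i < d) K i j * heav ((s i j)%:~R * (x i - T i j)).

Lemma FE x j : F x j = a * x j + (1 - a) * code x j.
Proof. by []. Qed.

Lemma code01 x j : 0 <= code x j <= 1.
Proof.
apply/andP; split.
  apply: sumr_ge0 => i _; have /andP[k0 _] := hK01 i j.
  by rewrite /heav; case: ifP => _; rewrite ?mulr1 ?mulr0.
rewrite -(hKsum j); apply: ler_sum => i _; have /andP[k0 _] := hK01 i j.
by rewrite /heav; case: ifP => _; rewrite ?mulr1 ?mulr0.
Qed.

Lemma F_cube x : unit_cube x -> unit_cube (F x).
Proof.
move=> hx j; rewrite FE; have /andP[c0 c1] := code01 x j.
have /andP[x0 x1] := hx j; case/andP: ha => a0 a1.
apply/andP; split; nra.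
Qed.

Lemma sign_same (p q e : R) : 0 < e -> e <= `|p| -> `|q - p| < e ->
  ((0 < q) = (0 < p)) /\ ((q < 0) = (p < 0)).
Proof.
move=> e0 hp; rewrite ltr_norml => /andP[h1 h2].
case: (boolP (0 <= p)) => p0.
  rewrite ger0_norm // in hp.
  split; apply/idP/idP => h; lra.
move: p0; rewrite -ltNge => p0.
rewrite ltr0_norm // in hp.
split; apply/idP/idP => h; lra.
Qed.

Lemma heav_same i j (u x : 'I_d -> R) (e : R) : 0 < e -> e <= `|x i - T i j| ->
  `|u i - x i| < e ->
  heav ((s i j)%:~R * (u i - T i j)) = heav ((s i j)%:~R * (x i - T i j)).
Proof.
move=> e0 h1 h2.
have h3 : `|(u i - T i j) - (x i - T i j)| < e.
  by rewrite (_ : u i - T i j - (x i - T i j) = u i - x i) //; ring.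
have [S1 S2] := sign_same (x i - T i j) (u i - T i j) e e0 h1 h3.
rewrite /heav; case: (hs i j) => [->|[->|->]].
- by rewrite !mul0r.
- by rewrite !mul1r S1.
- by rewrite !mulN1r !oppr_gt0 S2.
Qed.

Lemma code_same (u x : 'I_d -> R) (e : R) : 0 < e ->
  (forall i k, e <= `|x i - T i k|) -> (forall i, `|u i - x i| < e) ->
  code u = code x.
Proof.
move=> e0 hx hu; apply: funext => j; apply: eq_bigr => i _.
by rewrite (heav_same i j u x e e0 (hx i j) (hu i)).
Qed.

Lemma F_same (u x : 'I_d -> R) (e : R) : 0 < e ->
  (forall i k, e <= `|x i - T i k|) -> (forall i, `|u i - x i| < e) ->
  forall j, F u j - F x j = a * (u j - x j).
Proof.
move=> e0 hx hu j; rewrite !FE (code_same u x e e0 hx hu); ring.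
Qed.


Lemma lim_G (e : R) : 0 < e ->
  (forall x y, limit_set F x -> disc_set T y -> exists i, e <= `|x i - y i|) ->
  forall x, limit_set F x -> forall i k, e <= `|x i - T i k|.
Proof.
move=> e0 hd x hx i k.
pose y := fun j => if j == i then T i k else x j.
have hy : disc_set T y.
  split; last by exists i, k; rewrite /y eqxx.
  move=> j; rewrite /y; case: eqP => _; first exact: hT01.
  by case: hx => hx _; apply: hx.
have [j hj] := hd x y hx hy.
move: hj; rewrite /y; case: eqP => [->//|_].
rewrite subrr normr0 => h.
by have := lt_le_trans e0 h; rewrite ltxx.
Qed.

Definition conv (z : nat -> 'I_d -> R) (x : 'I_d -> R) :=
  forall η : R, 0 < η -> exists N, forall n, (N <= n)%N -> forall i, `|z n i - x i| < η.

Lemma conv_of_cvg (z : nat -> 'I_d -> R) (x : 'I_d -> R) : (forall i, (fun n => z n i) @ \oo --> x i) -> conv z x.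
Proof.
move=> h η η0.
have : \forall n \near \oo, forall i, `|x i - z n i| < η.
  apply: filter_forall => i.
  exact: ((cvgrPdist_lt _ _).1 (h i) η η0).
case=> N _ hN; exists N => n hn i; rewrite distrC; exact: hN n hn i.
Qed.

Lemma cvg_of_conv (z : nat -> 'I_d -> R) (x : 'I_d -> R) : conv z x -> forall i, (fun n => z n i) @ \oo --> x i.
Proof.
move=> h i; apply/cvgrPdist_lt => η η0; have [N hN] := h η η0.
by exists N => // n hn /=; rewrite distrC; apply: hN.
Qed.


Variable eps : R.
Hypothesis heps : 0 < eps.
Hypothesis hG : forall x, limit_set F x -> forall i k, eps <= `|x i - T i k|.

Lemma limP x : limit_set F x ->
  unit_cube x /\ exists y, unit_cube y /\ exists t : nat -> nat,
    (forall n, (t n < t n.+1)%N) /\ conv (fun n => iter (t n) F y) x.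
Proof.
case=> xc [y [yc [t [ti hc]]]]; split => //; exists y; split => //.
by exists t; split => //; apply: conv_of_cvg.
Qed.

Lemma small_mul (b v : R) : 0 <= b <= 1 -> `|b * v| <= `|v|.
Proof.
case/andP=> b0 b1; rewrite normrM (ger0_norm b0); apply: ler_piMl => //.
Qed.

Lemma invF x : limit_set F x -> limit_set F (F x).
Proof.
move=> hx; have [xc [y [yc [t [ti c]]]]] := limP _ hx.
split; first exact: F_cube.
exists y; split => //; exists (fun n => (t n).+1); split.
  by move=> n; rewrite ltnS.
apply: cvg_of_conv => η η0.
have hme : 0 < Num.min η eps by rewrite lt_min η0 heps.
have [N hN] := c (Num.min η eps) hme.
exists N => n hn i /=.
have hu : forall j, `|iter (t n) F y j - x j| < eps.
  by move=> j; have := hN n hn j; rewrite lt_min => /andP[].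
rewrite (F_same _ _ eps heps (hG _ hx) hu).
apply: le_lt_trans (small_mul a _ ha) _.
by have := hN n hn i; rewrite lt_min => /andP[].
Qed.

Lemma invFk x k : limit_set F x -> limit_set F (iter k F x).
Proof. by move=> hx; elim: k => [//|k IH]; rewrite iterS; apply: invF. Qed.

Lemma shadow x u : limit_set F x -> (forall i, `|u i - x i| < eps) ->
  forall k i, iter k F u i - iter k F x i = a ^+ k * (u i - x i).
Proof.
move=> hx hu; elim=> [|k IH] i; first by rewrite expr0 mul1r.
have hk : forall j, `|iter k F u j - iter k F x j| < eps.
  move=> j; rewrite IH; apply: le_lt_trans (hu j).
  apply: small_mul; case/andP: ha => a0 a1.
  by rewrite exprn_ge0 // exprn_ile1.
by rewrite !iterS (F_same _ _ eps heps (hG _ (invFk _ k hx)) hk) IH exprS mulrA.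
Qed.

Lemma tinc_ge (t : nat -> nat) : (forall n, (t n < t n.+1)%N) ->
  forall n j, (t n + j <= t (n + j))%N.
Proof.
move=> ti n; elim=> [|j IH]; first by rewrite !addn0.
rewrite !addnS; apply: leq_ltn_trans (ti _); done.
Qed.

Lemma recur x : limit_set F x -> forall η : R, 0 < η -> forall Kn : nat,
  exists p, (Kn <= p)%N /\ forall i, `|iter p F x i - x i| < η.
Proof.
move=> hx η η0 Kn; have [xc [y [yc [t [ti c]]]]] := limP _ hx.
have h2 : 0 < Num.min eps (η / 2) by rewrite lt_min heps divr_gt0.
have [n0 hn0] := c _ h2.
pose m := (n0 + Kn)%N.
have tm := tinc_ge t ti n0 Kn.
exists (t m - t n0)%N; split; first by rewrite /m; lia.
move=> i.
pose v := iter (t n0) F y.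
have hv : forall j, `|v j - x j| < eps.
  by move=> j; have := hn0 n0 (leqnn _) j; rewrite lt_min => /andP[].
have hv2 : `|v i - x i| < η / 2.
  by have := hn0 n0 (leqnn _) i; rewrite lt_min => /andP[].
have hm2 : `|iter (t m) F y i - x i| < η / 2.
  by have := hn0 m (leq_addr _ _) i; rewrite lt_min => /andP[].
have E : iter (t m) F y = iter (t m - t n0) F v.
  by rewrite /v -iterD subnK //; apply: leq_trans tm; apply: leq_addr.
have S := shadow _ _ hx hv (t m - t n0) i.
have -> : iter (t m - t n0) F x i - x i =
   (iter (t m) F y i - x i) - a ^+ (t m - t n0) * (v i - x i).
  by rewrite E -S; ring.
apply: le_lt_trans (ler_normB _ _) _.
have : `|a ^+ (t m - t n0) * (v i - x i)| <= `|v i - x i|.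
  apply: small_mul; case/andP: ha => a0 a1.
  by rewrite exprn_ge0 // exprn_ile1.
move=> h; lra.
Qed.


Lemma geo_small (b : R) : 0 <= b < 1 -> exists K0, b ^+ K0 < 1 / 2.
Proof.
case/andP=> b0 b1.
have hb : `|b| < 1 by rewrite ger0_norm.
have hc := @cvg_expr R b hb.
have h2 : (0 : R) < 1 / 2 by rewrite divr_gt0.
have [N _ hN] := (cvgrPdist_lt _ _).1 hc _ h2.
exists N; have := hN N (leqnn N); rewrite /= sub0r normrN ger0_norm //.
exact: exprn_ge0.
Qed.

Lemma periodic x : a < 1 -> limit_set F x ->
  exists q, (0 < q)%N /\ iter q F x = x.
Proof.
move=> a1 hx.
have [q [q1 hq]] := recur _ hx eps heps 1.
exists q; split => //.
pose w := iter q F x.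
apply: funext => i; apply/eqP; rewrite -subr_eq0; apply/negPn/negP => hne.
have hd : 0 < `|w i - x i| by rewrite normr_gt0.
set δ := `|w i - x i| in hd.
case/andP: ha => a0 _.
have ha01 : 0 <= a < 1 by rewrite a0 a1.
have [K0 hK0] := geo_small a ha01.
have hη : 0 < Num.min eps (δ / 4) by rewrite lt_min heps divr_gt0.
have [p [Kp hp]] := recur _ hx _ hη K0.
have hpe : forall j, `|iter p F x j - x j| < eps.
  by move=> j; have := hp j; rewrite lt_min => /andP[].
have hpd : `|iter p F x i - x i| < δ / 4.
  by have := hp i; rewrite lt_min => /andP[].
have S1 := shadow _ _ hx hq p i.
have S2 := shadow _ _ hx hpe q i.
have Ew : iter q F (iter p F x) = iter p F w by rewrite /w -!iterD addnC.
rewrite Ew in S2.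
have hap : a ^+ p <= a ^+ K0 by apply: ler_wiXn2l => //; apply: ltW.
have haq0 : 0 <= a ^+ q by apply: exprn_ge0.
have haq1 : a ^+ q <= 1 by apply: exprn_ile1 => //; apply: ltW.
have hap0 : 0 <= a ^+ p by apply: exprn_ge0.
have EQ : w i - x i = a ^+ p * (w i - x i) + (1 - a ^+ q) * (iter p F x i - x i).
  rewrite /w in S1 S2 *.
  by rewrite -S1 mulrBl mul1r -S2; ring.
have hle : δ <= a ^+ p * δ + `|iter p F x i - x i|.
  rewrite /δ {1}EQ; apply: le_trans (ler_normD _ _) _.
  rewrite !normrM (ger0_norm hap0) lerD2l ger0_norm ?subr_ge0 //.
  by apply: ler_piMl; [exact: normr_ge0 | lra].
have hδ0 : 0 <= δ by apply: normr_ge0.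
nra.
Qed.

Lemma iter_period x q : iter q F x = x -> forall n, iter (n * q) F x = x.
Proof.
move=> hq; elim=> [//|n IH]; by rewrite mulSn iterD IH hq.
Qed.

Lemma separated x x' : a < 1 -> limit_set F x -> limit_set F x' ->
  (forall i, `|x' i - x i| < eps) -> x' = x.
Proof.
move=> a1 hx hx' hc.
have [q [q0 hq]] := periodic _ a1 hx.
have [q' [q0' hq']] := periodic _ a1 hx'.
have S := shadow _ _ hx hc (q' * q).
rewrite (iter_period _ _ hq) (mulnC q' q) (iter_period _ _ hq') in S.
apply: funext => i; have := S i.
case/andP: ha => a0 _.
have hk : a ^+ (q * q') < 1 by rewrite exprn_ilt1 // muln_eq0 negb_or -!lt0n q0 q0'.
move=> h.
have h0 : (1 - a ^+ (q * q')) * (x' i - x i) = 0 by rewrite mulrBl mul1r -h subrr.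
move/eqP: h0; rewrite mulf_eq0 !subr_eq0 => /orP[/eqP h1|/eqP //].
by move: hk; rewrite -h1 ltxx.
Qed.

End Pf.

Lemma fin_sep (R : realType) (d : nat) (A : set ('I_d -> R)) (e : R) :
  0 < e -> A `<=` unit_cube ->
  (forall x x', A x -> A x' -> (forall i, `|x' i - x i| < e) -> x' = x) ->
  finite_set A.
Proof.
move=> e0 sub hsep.
pose M := (Num.trunc (e^-1)).+1.
have ei0 : 0 <= e^-1 by rewrite invr_ge0 ltW.
have hM : e^-1 < M%:R.
  by have /andP[_ ->] := trunc_itv ei0.
rewrite -div1r ltr_pdivrMr // in hM.
have M0 : (0 : R) < M%:R by rewrite ltr0n.
pose g := fun x : 'I_d -> R => [ffun i => (inord (Num.trunc (x i * M%:R)) : 'I_M.+1)].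
have ginj : {in A &, injective g}.
  move=> x x'; rewrite !in_setE => hx hx' hg; apply: hsep => // i.
  have hb : forall z, A z -> (Num.trunc (z i * M%:R) < M.+1)%N.
    move=> z hz; have /andP[z0 z1] := sub z hz i.
    have /andP[h1 _] := trunc_itv (mulr_ge0 z0 (ler0n _ M)).
    rewrite ltnS -(ler_nat R); apply: le_trans h1 _.
    by rewrite ler_piMl // ler0n.
  have := congr1 (fun f : {ffun 'I_d -> 'I_M.+1} => nat_of_ord (f i)) hg; rewrite /= !ffunE /= !inordK ?hb // => ht.
  have /andP[x0 x1] := sub x hx i; have /andP[x0' x1'] := sub x' hx' i.
  have /andP[h1 h2] := trunc_itv (mulr_ge0 x0 (ler0n _ M)).
  have /andP[h1' h2'] := trunc_itv (mulr_ge0 x0' (ler0n _ M)).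
  rewrite ht in h1 h2; rewrite -natr1 in h2 h2'.
  rewrite ltr_norml; apply/andP; split; nra.
by rewrite -(eq_finite_set (inj_card_eq ginj)); exact: finite_finset.
Qed.

Theorem mainTheorem4 (R : realType) (d : nat) (a : R)
  (K : 'I_d -> 'I_d -> R) (s : 'I_d -> 'I_d -> int) (T : 'I_d -> 'I_d -> R)
  (hK01 : forall i j, 0 <= K i j <= 1)
  (hKsum : forall j, \sum_(i < d) K i j = 1)
  (hs : forall i j, s i j = 0 \/ s i j = 1 \/ s i j = -1)
  (hsK : forall i j, s i j = 0 <-> K i j = 0)
  (hT01 : forall i j, 0 <= T i j <= 1)
  (hTK : forall i j, T i j = 0 <-> K i j = 0)
  (ha : 0 <= a <= 1) :
  dist_pos (limit_set (regnet a K s T)) (disc_set T) ->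
  finite_set (limit_set (regnet a K s T)).
Proof.
case=> eps heps hd.
have hG := lim_G R d a K s T hT01 eps heps hd.
case: (eqVneq a 1) => [a1|an1].
  case: (pselect (exists i : 'I_d, True)) => [[i0 _]|nd].
    exfalso.
    pose x := fun _ : 'I_d => T i0 i0.
    have Fx : regnet a K s T x = x.
      by apply: funext => j; rewrite /regnet a1 mul1r subrr mul0r addr0.
    have itx : forall n, iter n (regnet a K s T) x = x.
      by elim=> [//|n IH]; rewrite iterS IH Fx.
    have xc : unit_cube x by move=> j; exact: hT01.
    have hx : limit_set (regnet a K s T) x.
      split => //; exists x; split => //; exists (fun n => n); split => // i.
      have -> : (fun n => iter n (regnet a K s T) x i) = fun _ => x i.
        by apply: funext => n; rewrite itx.
      exact: cvg_cst.
    have := hG x hx i0 i0; rewrite /x subrr normr0 => h.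
    by have := lt_le_trans heps h; rewrite ltxx.
  apply: (@fin_sep R d _ eps heps); first by move=> x [].
  move=> x x' _ _ _; apply: funext => i; exfalso; apply: nd; by exists i.
have a1 : a < 1 by rewrite lt_neqAle an1; case/andP: ha.
apply: (@fin_sep R d _ eps heps); first by move=> x [].
move=> x x' hx hx' hc.
exact: (@separated R d a K s T hK01 hKsum hs ha eps heps hG x x' a1 hx hx' hc).
Qed.
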